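(* Let $f(t)$ be a solution of the kinetic Kuramoto model for non-identical oscillators with coupling $K>0$ and initial datum $f_0$ with $\int\omega^2 g(\omega)d\omega<\infty$. Then the functional $$\mathcal H_f(t)=\int_{[-\pi,\pi)\times\mathbb R}\Theta(t,\vartheta,\omega)\,\omega\,f_0(\vartheta,\omega)\,d\vartheta\,d\omega+K\frac{R(t)^2}{2}$$ is non-decreasing in $t$.
   Context: Kinetic Kuramoto model for non-identical oscillators: $f(t)$ is a probability measure on $\mathcal T\times\mathbb R$, $\mathcal T=\mathbb R/2\pi\mathbb Z$, given via characteristics $\dot\Theta(t,\vartheta,\omega)=\omega-KR(t)\sin(\Theta(t,\vartheta,\omega)-\varphi(t))$, $\Theta(0,\vartheta,\omega)=\vartheta$ (real-valued, with $\vartheta\in[-\pi,\pi)$), $R(t)e^{\mathrm{i}\varphi(t)}=\int e^{\mathrm{i}\vartheta}f(t,\vartheta,\omega)d\vartheta d\omega$, and $f(t)$ is the push-forward of $f_0$ by $(\vartheta,\omega)\mapsto(\Theta(t,\vartheta,\omega),\omega)$. $g$ is the $\omega$-marginal of $f_0$. *)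

(* Defs.v *)
From HB Require Import structures.
From mathcomp Require Import all_boot all_order all_algebra.
From mathcomp Require Import all_classical all_reals all_analysis.
Set Implicit Arguments. Unset Strict Implicit. Unset Printing Implicit Defensive.
Import Order.TTheory GRing.Theory Num.Theory.
Import numFieldNormedType.Exports.
Local Open Scope classical_set_scope.
Local Open Scope ring_scope.

(* A point (vartheta, omega) of [-pi,pi) x R is represented as x : R * R,
   x.1 = vartheta, x.2 = omega.  f0 is a probability measure on R * R
   concentrated on [-pi,pi) x R (the fundamental domain of the torus). *)

(* The characteristic flow Theta, together with the order parameter R(t) and
   phase phi(t), is a solution of the kinetic Kuramoto model with coupling K
   and initial datum f0:
   - Theta t (.,.) is measurable for every t,
   - R(t) e^{i phi(t)} = \int e^{i Theta(t,th,om)} f0(dth,dom)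
     (f(t) is the push-forward of f0 by (th,om) |-> (Theta(t,th,om),om)),
     written via real and imaginary parts, with R(t) >= 0,
   - Theta(0,th,om) = th, Theta(.,th,om) continuous on [0,+oo) and
     d/dt Theta = om - K R(t) sin(Theta - phi(t)) for t > 0. *)
Definition kuramoto_solution (R : realType) (f0 : probability (R * R)%type R)
  (K : R) (Theta : R -> R -> R -> R) (Rf phi : R -> R) : Prop :=
  (forall t, measurable_fun setT (fun x : R * R => Theta t x.1 x.2)) /\
  (forall t, 0 <= Rf t /\
     Rf t * cos (phi t) = Rintegral f0 setT (fun x => cos (Theta t x.1 x.2)) /\
     Rf t * sin (phi t) = Rintegral f0 setT (fun x => sin (Theta t x.1 x.2))) /\
  (forall th om : R, Theta 0 th om = th) /\
  (forall th om : R, {within `[0, +oo[, continuous (fun s => Theta s th om)}) /\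
  (forall (th om t : R), 0 < t ->
     is_derive t (1 : R) (fun s => Theta s th om)
       (om - K * Rf t * sin (Theta t th om - phi t))).

Definition H_functional (R : realType) (f0 : probability (R * R)%type R)
  (K : R) (Theta : R -> R -> R -> R) (Rf : R -> R) (t : R) : R :=
  Rintegral f0 setT (fun x => Theta t x.1 x.2 * x.2) + K * (Rf t ^+ 2) / 2.

(* Main.v *)
Require Import Defs.
From HB Require Import structures.
From mathcomp Require Import all_boot all_order all_algebra.
From mathcomp Require Import all_classical all_reals all_analysis.
From mathcomp Require Import ring lra measurable_realfun.
Import Order.TTheory GRing.Theory Num.Theory.
Import numFieldNormedType.Exports.
Local Open Scope classical_set_scope.
Local Open Scope ring_scope.


Lemma lerT {R : numDomainType} (x y z : R) : x <= y -> y <= z -> x <= z.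
Proof. exact: le_trans. Qed.

Lemma mvt_bound {R : realType} (f df : R -> R) (a b M : R) :
  a <= b -> (forall x, x \in `]a, b[%R -> is_derive x 1 f (df x)) ->
  {within `[a, b], continuous f} ->
  (forall c, a <= c <= b -> `|df c| <= M) ->
  `|f b - f a| <= M * (b - a).
Proof.
move=> ab fd fc bd; have [c cab ->] := MVT_segment ab fd fc.
have ba : 0 <= b - a by rewrite subr_ge0.
rewrite normrM (ger0_norm ba); apply: (ler_wpM2r ba).
by apply: bd; move: cab; rewrite in_itv.
Qed.

Lemma mvt_bound2 {R : realType} (f df : R -> R) (a b L : R) :
  a <= b -> (forall x, x \in `]a, b[%R -> is_derive x 1 f (df x)) ->
  {within `[a, b], continuous f} -> 0 <= L ->
  (forall c, a <= c <= b -> `|df c - df a| <= L * (c - a)) ->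
  `|f b - f a - (b - a) * df a| <= L * (b - a) ^+ 2.
Proof.
move=> ab fd fc L0 bd; have [c cab ->] := MVT_segment ab fd fc.
move: cab; rewrite in_itv /= => /andP[ac cb].
have ba : 0 <= b - a by rewrite subr_ge0.
rewrite [(b - a) * _]mulrC -mulrBl normrM (ger0_norm ba) expr2 mulrA.
apply: (ler_wpM2r ba).
apply: (le_trans (bd c _)); first by rewrite ac cb.
by apply: (ler_wpM2l L0); rewrite lerD2r.
Qed.

Lemma sin_lip {R : realType} (x y : R) : `|sin y - sin x| <= `|y - x|.
Proof.
suff H : forall x y : R, x <= y -> `|sin y - sin x| <= `|y - x|.
  have [/H//|/ltW yx] := leP x y.
  by rewrite distrC (distrC y); apply: H.
move=> {}x {}y xy.
have xy' : 0 <= y - x by rewrite subr_ge0.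
rewrite (ger0_norm xy') -[leRHS]mul1r.
apply: (@mvt_bound _ sin cos x y 1 xy).
- by apply: continuous_subspaceT; apply: continuous_sin.
- by move=> c ci; apply: cos_max.
Qed.

Lemma cos_lip {R : realType} (x y : R) : `|cos y - cos x| <= `|y - x|.
Proof.
suff H : forall x y : R, x <= y -> `|cos y - cos x| <= `|y - x|.
  have [/H//|/ltW yx] := leP x y.
  by rewrite distrC (distrC y); apply: H.
move=> {}x {}y xy.
have xy' : 0 <= y - x by rewrite subr_ge0.
rewrite (ger0_norm xy') -[leRHS]mul1r.
apply: (@mvt_bound _ cos (fun z => - sin z) x y 1 xy).
- by apply: continuous_subspaceT; apply: continuous_cos.
- by move=> c ci; rewrite normrN sin_max.
Qed.

Lemma sin_cos_taylor0 {R : realType} (d : R) :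
  `|sin d - d| <= d ^+ 2 /\ `|cos d - 1| <= d ^+ 2.
Proof.
suff H : forall d : R, 0 <= d -> `|sin d - d| <= d ^+ 2 /\ `|cos d - 1| <= d ^+ 2.
  have [/H//|/ltW d0] := leP 0 d.
  have := H (- d); rewrite oppr_ge0 => /(_ d0) [h1 h2]; split.
    by move: h1; rewrite sinN -opprD normrN sqrrN.
  by move: h2; rewrite cosN sqrrN.
move=> {}d d0; split.
- have c1 : {within `[0, d], continuous (@sin R)}.
    by apply: continuous_subspaceT; apply: continuous_sin.
  have c2 : forall c : R, 0 <= c <= d -> `|cos c - cos 0| <= 1 * (c - 0).
    move=> c /andP[c0 cd]; have h := cos_lip 0 c.
    by rewrite subr0 (ger0_norm c0) in h; rewrite mul1r subr0.
  have := @mvt_bound2 _ sin cos 0 d 1 d0 (fun x _ => is_derive_sin x) c1 ler01 c2.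
  by rewrite sin0 cos0 !subr0 mulr1 mul1r.
- have c1 : {within `[0, d], continuous (@cos R)}.
    by apply: continuous_subspaceT; apply: continuous_cos.
  have c2 : forall c : R, 0 <= c <= d -> `|- sin c - - sin 0| <= 1 * (c - 0).
    move=> c /andP[c0 cd]; have h := sin_lip 0 c.
    by rewrite subr0 (ger0_norm c0) in h; rewrite mul1r subr0 -opprD normrN.
  have := @mvt_bound2 _ cos (fun z => - sin z) 0 d 1 d0 (fun x _ => is_derive_cos x) c1 ler01 c2.
  by rewrite sin0 cos0 !subr0 oppr0 mulr0 subr0 mul1r.
Qed.

Lemma cos_taylor {R : realType} (u d : R) :
  `|cos (u + d) - cos u + d * sin u| <= 2 * d ^+ 2.
Proof.
have [h1 h2] := sin_cos_taylor0 d.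
have -> : cos (u + d) - cos u + d * sin u =
   cos u * (cos d - 1) - sin u * (sin d - d) by rewrite cosD; ring.
have e1 := ler_normB (cos u * (cos d - 1)) (sin u * (sin d - d)).
have n1 : `|cos u * (cos d - 1)| <= d ^+ 2.
  rewrite normrM -[leRHS]mul1r; apply: ler_pM => //; exact: cos_max.
have n2 : `|sin u * (sin d - d)| <= d ^+ 2.
  rewrite normrM -[leRHS]mul1r; apply: ler_pM => //; exact: sin_max.
lra.
Qed.

Lemma sin_taylor {R : realType} (u d : R) :
  `|sin (u + d) - sin u - d * cos u| <= 2 * d ^+ 2.
Proof.
have [h1 h2] := sin_cos_taylor0 d.
have -> : sin (u + d) - sin u - d * cos u =
   sin u * (cos d - 1) + cos u * (sin d - d) by rewrite sinD; ring.
have e1 := ler_normD (sin u * (cos d - 1)) (cos u * (sin d - d)).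
have n1 : `|sin u * (cos d - 1)| <= d ^+ 2.
  rewrite normrM -[leRHS]mul1r; apply: ler_pM => //; exact: sin_max.
have n2 : `|cos u * (sin d - d)| <= d ^+ 2.
  rewrite normrM -[leRHS]mul1r; apply: ler_pM => //; exact: cos_max.
lra.
Qed.



Lemma intD {d} {T : measurableType d} {R : realType} {mu : {measure set T -> \bar R}}
  {f g : T -> R} :
  mu.-integrable setT (EFin \o f) -> mu.-integrable setT (EFin \o g) ->
  mu.-integrable setT (EFin \o (fun x => f x + g x)).
Proof.
move=> hf hg; apply: eq_integrable (integrableD _ hf hg) => // x _.

Qed.

Lemma intB {d} {T : measurableType d} {R : realType} {mu : {measure set T -> \bar R}}
  {f g : T -> R} :
  mu.-integrable setT (EFin \o f) -> mu.-integrable setT (EFin \o g) ->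
  mu.-integrable setT (EFin \o (fun x => f x - g x)).
Proof.
move=> hf hg; apply: eq_integrable (integrableB _ hf hg) => // x _.

Qed.

Lemma intZ {d} {T : measurableType d} {R : realType} {mu : {measure set T -> \bar R}}
  (k : R) (f : T -> R) :
  mu.-integrable setT (EFin \o f) ->
  mu.-integrable setT (EFin \o (fun x => k * f x)).
Proof.
move=> hf; apply: eq_integrable (integrableZl _ k hf) => // x _.

Qed.

Lemma int_dom {d} {T : measurableType d} {R : realType} {mu : {measure set T -> \bar R}}
  {f g : T -> R} :
  measurable_fun setT f -> mu.-integrable setT (EFin \o g) ->
  (forall x, `|f x| <= g x) -> mu.-integrable setT (EFin \o f).
Proof.
move=> mf hg fg; apply: le_integrable hg => //.
  exact/measurable_EFinP.
move=> x _ /=; rewrite lee_fin; apply: (le_trans (fg x)); exact: ler_norm.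
Qed.

Lemma Rint_norm_le {d} {T : measurableType d} {R : realType} {mu : {measure set T -> \bar R}}
  {f g : T -> R} :
  mu.-integrable setT (EFin \o f) -> mu.-integrable setT (EFin \o g) ->
  (forall x, `|f x| <= g x) ->
  `|Rintegral mu setT f| <= Rintegral mu setT g.
Proof.
move=> hf hg fg; apply: (le_trans (le_normr_Rintegral _ _)) => //.
apply: le_Rintegral => //; first exact: integrable_norm.
Qed.



Theorem mainTheorem8 (R : realType) (f0 : probability (R * R)%type R) (K : R)
  (Theta : R -> R -> R -> R) (Rf phi : R -> R) :
  0 < K ->
  f0 [set x | - pi <= x.1 < pi] = 1%E ->
  f0.-integrable setT (fun x => (x.2 ^+ 2)%:E) ->
  kuramoto_solution f0 K Theta Rf phi ->
  forall s t, 0 <= s -> s <= t ->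
    H_functional f0 K Theta Rf s <= H_functional f0 K Theta Rf t.
Proof.
move=> K0 hA hint [mT [hRf [h0 [hc hd]]]] s t s0 st.
pose Th (t : R) (x : R * R) := Theta t x.1 x.2.
have mTh : forall t, measurable_fun setT (Th t) by move=> r; exact: mT.
pose C (t : R) := Rintegral f0 setT (fun x => cos (Th t x)).
pose S (t : R) := Rintegral f0 setT (fun x => sin (Th t x)).
have icst : forall c : R, f0.-integrable setT (EFin \o (fun=> c)).
  by move=> c; exact: finite_measure_integrable_cst.
have icos : forall t, f0.-integrable setT (EFin \o (fun x => cos (Th t x))).
  move=> r; apply: (@int_dom _ _ _ _ _ (fun=> 1)) => //.
  - apply: measurableT_comp; [|exact: mTh]; apply: continuous_measurable_fun; exact: continuous_cos.
  - by move=> x; exact: cos_max.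
have isin : forall t, f0.-integrable setT (EFin \o (fun x => sin (Th t x))).
  move=> r; apply: (@int_dom _ _ _ _ _ (fun=> 1)) => //.
  - apply: measurableT_comp; [|exact: mTh]; apply: continuous_measurable_fun; exact: continuous_sin.
  - by move=> x; exact: sin_max.
have f0T : fine (f0 setT) = 1 by rewrite probability_setT.
have Rint1 : forall c : R, Rintegral f0 setT (fun=> c) = c.
  by move=> c; rewrite Rintegral_cst // f0T mulr1.
have Cb : forall t, `|C t| <= 1.
  move=> r; have := Rint_norm_le (icos r) (icst 1) (fun x => cos_max _).
  by rewrite Rint1.
have Sb : forall t, `|S t| <= 1.
  move=> r; have := Rint_norm_le (isin r) (icst 1) (fun x => sin_max _).
  by rewrite Rint1.
have Rf2 : forall t, Rf t ^+ 2 = C t ^+ 2 + S t ^+ 2.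
  move=> r; have [_ [e1 e2]] := hRf r.
  have -> : C r = Rf r * cos (phi r) by rewrite e1.
  have -> : S r = Rf r * sin (phi r) by rewrite e2.
  by rewrite !exprMn -mulrDr cos2Dsin2 mulr1.
pose v (t : R) (x : R * R) := x.2 - K * (C t * sin (Th t x) - S t * cos (Th t x)).
have hder : forall (x : R * R) (r : R), 0 < r -> is_derive r 1 (fun s => Th s x) (v r x).
  move=> x r r0; have := hd x.1 x.2 r r0.
  suff -> : x.2 - K * Rf r * sin (Theta r x.1 x.2 - phi r) = v r x by [].
  have [_ [e1 e2]] := hRf r.
  rewrite /v /C /S /Th -e1 -e2 sinB; ring.
have vb : forall (r : R) (x : R * R), `|v r x| <= `|x.2| + 2 * K.
  move=> r x.
  have h1 : `|C r * sin (Th r x)| <= 1.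
    by rewrite normrM -[1]mulr1; apply: ler_pM => //; exact: sin_max.
  have h2 : `|S r * cos (Th r x)| <= 1.
    by rewrite normrM -[1]mulr1; apply: ler_pM => //; exact: cos_max.
  have h3 := ler_normB (C r * sin (Th r x)) (S r * cos (Th r x)).
  have h4 : `|K * (C r * sin (Th r x) - S r * cos (Th r x))| <= K * 2.
    by rewrite normrM gtr0_norm //; apply: ler_wpM2l; [exact: ltW|lra].
  have h5 := ler_normB x.2 (K * (C r * sin (Th r x) - S r * cos (Th r x))).
  rewrite /v; lra.
have lipT : forall (x : R * R) (r1 r2 : R), 0 <= r1 -> r1 <= r2 ->
    `|Th r2 x - Th r1 x| <= (`|x.2| + 2 * K) * (r2 - r1).
  move=> x r1 r2 r10 r12.
  apply: (@mvt_bound _ (fun s => Th s x) (fun s => v s x) r1 r2 _ r12).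
  - move=> z; rewrite in_itv /= => /andP[z1 z2]; apply: hder.
    exact: le_lt_trans z1.
  - apply: (continuous_subspaceW _ (hc x.1 x.2)) => z /=.
    rewrite !in_itv /= andbT => /andP[z1 z2]; exact: le_trans z1.
  - by move=> c _; exact: vb.

have nK : forall y : R, `|y| ^+ 2 = y ^+ 2 by move=> y; rewrite real_normK // num_real.
have wq : forall x : R * R, `|x.2| <= 1 + x.2 ^+ 2.
  move=> x; have := sqr_ge0 (`|x.2| - 1); rewrite -nK.
  have := normr_ge0 x.2; nra.
pose q (x : R * R) := 1 + x.2 ^+ 2.
have ix2 : f0.-integrable setT (EFin \o (fun x : R * R => x.2 ^+ 2)) by exact: hint.
have iq : f0.-integrable setT (EFin \o q) by exact: intD (icst 1) ix2.
have icq : forall c, f0.-integrable setT (EFin \o (fun x => c * q x)).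
  by move=> c; exact: intZ.
have m2 : measurable_fun setT (fun x : R * R => x.2) by exact: measurable_snd.
have mw : measurable_fun setT (fun x : R * R => `|x.2|).
  by apply: measurableT_comp => //; exact: normr_measurable.
pose a (x : R * R) := `|x.2| + 2 * K.
have ma : measurable_fun setT a by apply: measurable_funD => //.
have aq : forall x, a x <= (1 + 2 * K) * q x.
  move=> x; have := wq x; have := sqr_ge0 x.2; rewrite /a /q; nra.
have a0 : forall x, 0 <= a x.
  by move=> x; rewrite /a; have := normr_ge0 x.2; lra.
have ia : f0.-integrable setT (EFin \o a).
  apply: (int_dom ma (icq (1 + 2 * K))) => x.
  by rewrite ger0_norm // aq.
pose LA := Rintegral f0 setT a.
have LA0 : 0 <= LA by apply: Rintegral_ge0 => x _; exact: a0.
have lipC : forall r1 r2 : R, 0 <= r1 -> r1 <= r2 -> `|C r2 - C r1| <= (r2 - r1) * LA.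
  move=> r1 r2 r10 r12; rewrite /C -RintegralB // /LA -RintegralZl //.
  apply: Rint_norm_le; [exact: intB|exact: intZ|] => x.
  apply: (le_trans (cos_lip _ _)); rewrite mulrC; exact: lipT.
have lipS : forall r1 r2 : R, 0 <= r1 -> r1 <= r2 -> `|S r2 - S r1| <= (r2 - r1) * LA.
  move=> r1 r2 r10 r12; rewrite /S -RintegralB // /LA -RintegralZl //.
  apply: Rint_norm_le; [exact: intB|exact: intZ|] => x.
  apply: (le_trans (sin_lip _ _)); rewrite mulrC; exact: lipT.

have lipv : forall (x : R * R) (r1 r2 : R), 0 <= r1 -> r1 <= r2 ->
    `|v r2 x - v r1 x| <= (2 * K * (LA + a x)) * (r2 - r1).
  move=> x r1 r2 r10 r12.
  set D := r2 - r1.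
  have D0 : 0 <= D by rewrite /D subr_ge0.
  set X1 := (C r2 - C r1) * sin (Th r2 x).
  set X2 := C r1 * (sin (Th r2 x) - sin (Th r1 x)).
  set X3 := (S r2 - S r1) * cos (Th r2 x).
  set X4 := S r1 * (cos (Th r2 x) - cos (Th r1 x)).
  have -> : v r2 x - v r1 x = - (K * (X1 + X2 - X3 - X4)).
    by rewrite /v /X1 /X2 /X3 /X4; ring.
  have hT := lipT x r1 r2 r10 r12.
  have b1 : `|X1| <= D * LA.
    rewrite /X1 normrM -[leRHS]mulr1; apply: ler_pM => //; first exact: lipC.
    exact: sin_max.
  have b2 : `|X2| <= a x * D.
    rewrite /X2 normrM -[leRHS]mul1r; apply: ler_pM => //.
    exact: (le_trans (sin_lip _ _)).
  have b3 : `|X3| <= D * LA.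
    rewrite /X3 normrM -[leRHS]mulr1; apply: ler_pM => //; first exact: lipS.
    exact: cos_max.
  have b4 : `|X4| <= a x * D.
    rewrite /X4 normrM -[leRHS]mul1r; apply: ler_pM => //.
    exact: (le_trans (cos_lip _ _)).
  have t1 := ler_normD X1 X2.
  have t2 := ler_normB (X1 + X2) X3.
  have t3 := ler_normB (X1 + X2 - X3) X4.
  have tt : `|X1 + X2 - X3 - X4| <= 2 * (D * LA) + 2 * (a x * D) by lra.
  rewrite normrN normrM gtr0_norm //.
  apply: (le_trans (ler_wpM2l (ltW K0) tt)).
  by rewrite le_eqVlt; apply/orP; left; apply/eqP; ring.
have tayT : forall (x : R * R) (r h : R), 0 <= r -> 0 <= h ->
    `|Th (r + h) x - Th r x - h * v r x| <= (2 * K * (LA + a x)) * h ^+ 2.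
  move=> x r h r0 h0'.
  have rh : r <= r + h by rewrite lerDl.
  have := @mvt_bound2 _ (fun s => Th s x) (fun s => v s x) r (r + h)
    (2 * K * (LA + a x)) rh.
  have e : r + h - r = h by ring.
  rewrite e; apply.
  - move=> z; rewrite in_itv /= => /andP[z1 z2]; apply: hder.
    exact: le_lt_trans z1.
  - apply: (continuous_subspaceW _ (hc x.1 x.2)) => z /=.
    rewrite !in_itv /= andbT => /andP[z1 z2]; exact: le_trans z1.
  - have := a0 x; have := ltW K0; nra.
  - move=> c /andP[c1 c2]; exact: lipv.

pose A := [set x : R * R | - pi <= x.1 < pi].
have mA : measurable A.
  have -> : A = [set` `[- pi, pi[%R] `*` setT.
    by apply/seteqP; split => x /=; rewrite in_itv /= /A /=; [move=> ?; split|case].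
  apply: measurableX; [exact: measurable_itv | exact: measurableT].
have nA : f0 (~` A) = 0%E by rewrite probability_setC // hA subee.
have i12 : f0.-integrable setT (EFin \o (fun x : R * R => x.1 * x.2)).
  have m12 : measurable_fun setT (fun x : R * R => x.1 * x.2).
    by apply: measurable_funM => //; exact: measurable_fst.
  apply/integrableP; split; first exact/measurable_EFinP.
  have /integrableP[_ hq] := icq pi.
  apply: le_lt_trans hq.
  apply: ae_ge0_le_integral => //.
  - by apply: measurableT_comp => //; exact/measurable_EFinP.
  - apply/measurable_EFinP; apply: measurableT_comp => //.
  - apply: measurable_funM => //; apply: measurable_funD => //.
    exact: measurable_funX.
  - hnf; exists (~` A); split => //; first exact: measurableC.
    move=> x /= nPx Ax; apply: nPx => _.
    move: Ax; rewrite /A /= => /andP[x1 x2].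
    rewrite lee_fin normrM /q.
    have p0 := pi_ge0 R.
    have hx1 : `|x.1| <= pi by rewrite ler_norml x1 ltW.
    rewrite (ger0_norm (x := pi * _)); last by have := sqr_ge0 x.2; nra.
    apply: ler_pM => //; exact: wq.
have ITh : forall r : R, 0 <= r -> f0.-integrable setT (EFin \o (fun x => Th r x * x.2)).
  move=> r r0.
  have iD : f0.-integrable setT (EFin \o (fun x => (Th r x - x.1) * x.2)).
    apply: (int_dom _ (icq (r * (1 + 2 * K)))).
      apply: measurable_funM => //; apply: measurable_funB => //.
    move=> x; rewrite normrM.
    have := lipT x 0 r (lexx _) r0; rewrite subr0 /Th h0 => h1.
    have h2 := wq x; have h3 := normr_ge0 x.2; have h4 := sqr_ge0 x.2.
    have h5 : `|x.2| * `|x.2| = x.2 ^+ 2 by rewrite -expr2 nK.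
    have s1 := ler_wpM2r h3 h1.
    have s2 : (`|x.2| + 2 * K) * `|x.2| <= (1 + 2 * K) * q x.
      rewrite /q; have := ltW K0; nra.
    have s3 := ler_wpM2l r0 s2.
    have e1 : (`|x.2| + 2 * K) * r * `|x.2| = r * ((`|x.2| + 2 * K) * `|x.2|) by ring.
    have e2 : r * (1 + 2 * K) * q x = r * ((1 + 2 * K) * q x) by ring.
    by rewrite e2; apply: (le_trans s1); rewrite e1.
  apply: eq_integrable (intD iD i12) => // x _ /=; congr EFin; ring.

pose Mc := 2 * K * LA * (1 + 2 * K) + 6 * K * (1 + 2 * K) ^+ 2.
have pb : forall x, (2 * K * (LA + a x)) * a x + 4 * K * a x ^+ 2 <= Mc * q x.
  move=> x.
  have h1 := aq x.
  have h2 : a x ^+ 2 <= (1 + 2 * K) ^+ 2 * q x.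
    have f1 := wq x; have f2 := normr_ge0 x.2; have f3 := sqr_ge0 x.2.
    have f4 : `|x.2| ^+ 2 = x.2 ^+ 2 by exact: nK.
    have f5 : K * `|x.2| <= K * q x by apply: ler_wpM2l; [exact: ltW|exact: f1].
    have f6 : K ^+ 2 <= K ^+ 2 * q x.
      rewrite -[leLHS]mulr1; apply: ler_wpM2l; first exact: sqr_ge0.
      by rewrite /q lerDl.
    have e : (1 + 2 * K) ^+ 2 * q x = q x + 4 * (K * q x) + 4 * (K ^+ 2 * q x) by ring.
    have e' : a x ^+ 2 = x.2 ^+ 2 + 4 * (K * `|x.2|) + 4 * K ^+ 2.
      by rewrite /a -f4; ring.
    have f7 : x.2 ^+ 2 <= q x by rewrite /q lerDr.
    rewrite e e'; lra.
  have h3 : 2 * K * LA * a x <= 2 * K * LA * ((1 + 2 * K) * q x).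
    apply: ler_wpM2l => //; apply: mulr_ge0 => //; have := ltW K0; lra.
  have h4 : 6 * K * a x ^+ 2 <= 6 * K * ((1 + 2 * K) ^+ 2 * q x).
    apply: ler_wpM2l => //; have := ltW K0; lra.
  have e : (2 * K * (LA + a x)) * a x + 4 * K * a x ^+ 2 =
     2 * K * LA * a x + 6 * K * a x ^+ 2 by ring.
  have e' : Mc * q x = 2 * K * LA * ((1 + 2 * K) * q x) +
     6 * K * ((1 + 2 * K) ^+ 2 * q x) by rewrite /Mc; ring.
  rewrite e e'; lra.
pose G (r h : R) (x : R * R) :=
  (Th (r + h) x * x.2 - Th r x * x.2)
  + K * C r * (cos (Th (r + h) x) - cos (Th r x))
  + K * S r * (sin (Th (r + h) x) - sin (Th r x)).
have Gb : forall (r h : R) (x : R * R), 0 <= r -> 0 <= h ->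
    - (h ^+ 2) * (Mc * q x) <= G r h x.
  move=> r h x r0 h0'.
  set u := Th r x.
  set dl := Th (r + h) x - u.
  set w := v r x.
  have eu : u + dl = Th (r + h) x by rewrite /dl; ring.
  have rc := cos_taylor u dl; rewrite eu in rc.
  have rs := sin_taylor u dl; rewrite eu in rs.
  set rC := cos (Th (r + h) x) - cos u + dl * sin u in rc.
  set rS := sin (Th (r + h) x) - sin u - dl * cos u in rs.
  have eG : G r h x = dl * w + K * (C r * rC + S r * rS).
    by rewrite /G /w /v /rC /rS /dl -/u; ring.
  rewrite eG.
  have hd1 : `|dl| <= a x * h.
    have := lipT x r (r + h) r0 (ler_wpDr h0' (lexx r)).
    by rewrite /dl /a; have -> : r + h - r = h by ring.
  have hd2 : `|dl - h * w| <= 2 * K * (LA + a x) * h ^+ 2 by exact: tayT.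
  have hw : `|w| <= a x by exact: vb.
  have p1 : `|(dl - h * w) * w| <= (2 * K * (LA + a x) * h ^+ 2) * a x.
    by rewrite normrM; apply: ler_pM.
  have p1' := ler_norm (- ((dl - h * w) * w)); rewrite normrN in p1'.
  have p2 : 0 <= h * w ^+ 2 by apply: mulr_ge0 => //; exact: sqr_ge0.
  have e1 : dl * w = h * w ^+ 2 + (dl - h * w) * w by ring.
  have p3a : `|C r * rC| <= 2 * dl ^+ 2.
    by rewrite normrM -[leRHS]mul1r; apply: ler_pM.
  have p3b : `|S r * rS| <= 2 * dl ^+ 2.
    by rewrite normrM -[leRHS]mul1r; apply: ler_pM.
  have p3c := ler_normD (C r * rC) (S r * rS).
  have p3d := ler_norm (- (C r * rC + S r * rS)); rewrite normrN in p3d.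
  have p4 : dl ^+ 2 <= a x ^+ 2 * h ^+ 2.
    rewrite -exprMn -nK; apply: lerXn2r => //; rewrite ?nnegrE //.
    by apply: mulr_ge0 => //.
  have p5 : - (4 * dl ^+ 2) <= C r * rC + S r * rS by lra.
  have p6 : K * (- (4 * dl ^+ 2)) <= K * (C r * rC + S r * rS).
    by apply: ler_wpM2l => //; exact: ltW.
  have p7 : 4 * K * dl ^+ 2 <= 4 * K * (a x ^+ 2 * h ^+ 2).
    apply: ler_wpM2l => //; have := ltW K0; lra.
  have p8 := pb x.
  have p9 : h ^+ 2 * ((2 * K * (LA + a x)) * a x + 4 * K * a x ^+ 2)
      <= h ^+ 2 * (Mc * q x) by apply: ler_wpM2l => //; exact: sqr_ge0.
  have e2 : h ^+ 2 * ((2 * K * (LA + a x)) * a x + 4 * K * a x ^+ 2) =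
    (2 * K * (LA + a x) * h ^+ 2) * a x + 4 * K * (a x ^+ 2 * h ^+ 2) by ring.
  have e3 : K * (- (4 * dl ^+ 2)) = - (4 * K * dl ^+ 2) by ring.
  rewrite e2 in p9; rewrite e3 in p6.
  have e4 : - h ^+ 2 * (Mc * q x) = - (h ^+ 2 * (Mc * q x)) by ring.
  rewrite e4; lra.

pose I (r : R) := Rintegral f0 setT (fun x => Th r x * x.2).
pose Hf (r : R) := I r + K * (C r ^+ 2 + S r ^+ 2) / 2.
have HE : forall r, H_functional f0 K Theta Rf r = Hf r.
  by move=> r; rewrite /H_functional Rf2.
pose Mt := Rintegral f0 setT (fun x => Mc * q x).
have step : forall r h : R, 0 <= r -> 0 <= h -> Hf r - h ^+ 2 * Mt <= Hf (r + h).
  move=> r h r0 h0'.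
  have rh0 : 0 <= r + h by exact: addr_ge0.
  have i1 : f0.-integrable setT (EFin \o (fun x => Th (r + h) x * x.2 - Th r x * x.2)).
    by apply: intB; apply: ITh.
  have i2 : f0.-integrable setT (EFin \o (fun x => K * C r * (cos (Th (r + h) x) - cos (Th r x)))).
    by apply: intZ; apply: intB.
  have i3 : f0.-integrable setT (EFin \o (fun x => K * S r * (sin (Th (r + h) x) - sin (Th r x)))).
    by apply: intZ; apply: intB.
  have iGf : f0.-integrable setT (EFin \o G r h) by apply: intD => //; apply: intD.
  have eG : Rintegral f0 setT (G r h) = (I (r + h) - I r)
      + K * C r * (C (r + h) - C r) + K * S r * (S (r + h) - S r).
    rewrite /G RintegralD //; last by apply: intD.
    rewrite RintegralD // RintegralB; [|done|exact: ITh|exact: ITh].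
    rewrite RintegralZl //; last by apply: intB.
    rewrite RintegralZl //; last by apply: intB.
    by rewrite RintegralB // RintegralB.
  have lG : Rintegral f0 setT (fun x => - (h ^+ 2) * (Mc * q x)) <= Rintegral f0 setT (G r h).
    apply: le_Rintegral => //; first by apply: intZ.
    by move=> x _; apply: Gb.
  rewrite RintegralZl // in lG.
  have sq : 0 <= K * ((C (r + h) - C r) ^+ 2 + (S (r + h) - S r) ^+ 2).
    by apply: mulr_ge0; [exact: ltW| apply: addr_ge0; exact: sqr_ge0].
  have e : Hf (r + h) - Hf r = Rintegral f0 setT (G r h)
      + K * ((C (r + h) - C r) ^+ 2 + (S (r + h) - S r) ^+ 2) / 2.
    by rewrite eG /Hf; field.
  rewrite -/Mt in lG; lra.
have tele : forall (h : R) (n : nat), 0 <= h ->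
    Hf s - n%:R * (h ^+ 2 * Mt) <= Hf (s + n%:R * h).
  move=> h n h0'; elim: n => [|n IH]; first by rewrite !mul0r subr0 addr0.
  have sn0 : 0 <= s + n%:R * h by apply: addr_ge0 => //; apply: mulr_ge0.
  have := step (s + n%:R * h) h sn0 h0'.
  have -> : s + n%:R * h + h = s + n.+1%:R * h by rewrite -natr1; ring.
  have -> : n.+1%:R * (h ^+ 2 * Mt) = n%:R * (h ^+ 2 * Mt) + h ^+ 2 * Mt.
    by rewrite -natr1; ring.
  lra.
have Mt0 : 0 <= Mt.
  apply: Rintegral_ge0 => x _; apply: mulr_ge0; last first.
    by rewrite /q; apply: addr_ge0 => //; exact: sqr_ge0.
  rewrite /Mc; apply: addr_ge0; apply: mulr_ge0; try apply: mulr_ge0;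
    try apply: mulr_ge0 => //; try (have := ltW K0; lra); exact: sqr_ge0.
rewrite !HE.
have key : forall n : nat, Hf s - (t - s) ^+ 2 * Mt / n.+1%:R <= Hf t.
  move=> n.
  have hpos : 0 < n.+1%:R :> R by rewrite ltr0n.
  have h0' : 0 <= (t - s) / n.+1%:R by apply: divr_ge0; [rewrite subr_ge0|exact: ltW].
  have := tele ((t - s) / n.+1%:R) n.+1 h0'.
  have -> : s + n.+1%:R * ((t - s) / n.+1%:R) = t by field; rewrite gt_eqF.
  have -> : n.+1%:R * (((t - s) / n.+1%:R) ^+ 2 * Mt) = (t - s) ^+ 2 * Mt / n.+1%:R.
    by field; rewrite gt_eqF.
  done.
apply/ler_addgt0Pr => e e0.
set c := (t - s) ^+ 2 * Mt.
have c0 : 0 <= c by apply: mulr_ge0 => //; exact: sqr_ge0.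
have [n hn] : exists n : nat, c / e < n.+1%:R.
  by exists (Num.truncn (c / e)); exact: truncnS_gt.
have ce : c / n.+1%:R <= e.
  have hpos : 0 < n.+1%:R :> R by rewrite ltr0n.
  rewrite ler_pdivrMr // mulrC -ler_pdivrMr //; exact: ltW.
have kn := key n; rewrite -/c in kn.
by have := lerD kn ce; rewrite subrK.
Qed.
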